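(* Let $k\geq 2$ and let $a,b$ be positive integers with $a\geq k-1$ and $b\geq a-k+3$. Then the rooted $k$-hypergraph $\mathcal{T}=\mathcal{T}(a,b,k)$ (defined in the context) is balanced: for every nonempty set $S$ of non-root vertices of $\mathcal{T}$, $\frac{\epsilon(S)}{|S|}\geq \frac{b}{a}$, where $\epsilon(S)$ is the number of edges of $\mathcal{T}$ containing at least one vertex of $S$ (note $b/a=\epsilon(U-R)/|U-R|$ where $U-R$ is the set of all non-roots).
   Context: The rooted $k$-hypergraph $\mathcal{T}(a,b,k)$: its non-root vertices are $v_1,\dots,v_a$ (in this order); for $1\leq j\leq a-k+1$, $\{v_j,\dots,v_{j+k-1}\}$ is an edge. For $1\leq j\leq a-k+2$, call $\{v_j,\dots,v_{j+k-2}\}$ the $j$-th $(k-1)$-set. Its roots are $\rho_1,\dots,\rho_{b-a+k-1}$ (set $R$), and for each $i$ there is an edge consisting of $\rho_i$ together with the $m_i$-th $(k-1)$-set, where $m_i=\left\lfloor 1+\frac{(i-1)(a-k+2)}{b-a+k-2}\right\rfloor$ for $1\leq i\leq b-a+k-2$ and $m_{b-a+k-1}=a-k+2$. These are all the edges, so $\mathcal{T}$ has exactly $b$ edges. A rooted $k$-hypergraph with vertex set $U$ and root set $R$ is balanced if every nonempty $S\subseteq U-R$ satisfies $\epsilon(S)/|S|\geq \epsilon(U-R)/|U-R|$. *)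

(* Defs.v *)
From mathcomp Require Import all_boot all_order all_algebra.
Set Implicit Arguments. Unset Strict Implicit. Unset Printing Implicit Defensive.
Import Order.TTheory GRing.Theory Num.Theory.

(* A rooted hypergraph on a finite vertex type V is given by its root set R
   and its list of edges E (a list, so edges are counted with multiplicity).
   The non-roots are ~: R. *)

Definition eps (V : finType) (E : seq {set V}) (S : {set V}) : nat :=
  count (fun e : {set V} => ~~ [disjoint e & S]) E.

Definition balanced (V : finType) (R : {set V}) (E : seq {set V}) : Prop :=
  forall S : {set V}, S \subset ~: R -> S != set0 ->
    ((eps E (~: R))%:R / #|~: R|%:R <= (eps E S)%:R / #|S|%:R :> rat)%R.

(* Non-root v_{x+1} is [inl x] for x : 'I_a (0-indexed);
   root rho_{i+1} is [inr i] for i : 'I_(nroots a b k). *)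

Definition nroots (a b k : nat) : nat := (b + k) - (a + 1).

Definition Tvert (a b k : nat) : finType := ('I_a + 'I_(nroots a b k))%type.

(* m_i for 1 <= i <= b-a+k-1 (1-indexed i). *)
Definition mT (a b k i : nat) : nat :=
  if i <= (b + k) - (a + 2) then
    1 + ((i - 1) * ((a + 2) - k)) %/ ((b + k) - (a + 2))
  else (a + 2) - k.

(* the j-th (k-1)-set {v_j, ..., v_{j+k-2}} (1-indexed j) *)
Definition kset (a b k j : nat) : {set Tvert a b k} :=
  [set v : Tvert a b k |
     if v is inl x then (j - 1 <= x) && (x < j - 1 + (k - 1)) else false].

(* path edge {v_j, ..., v_{j+k-1}} (1-indexed j, 1 <= j <= a-k+1) *)
Definition pedge (a b k j : nat) : {set Tvert a b k} :=
  [set v : Tvert a b k |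
     if v is inl x then (j - 1 <= x) && (x < j - 1 + k) else false].

(* root edge {rho_i} u (m_i-th (k-1)-set), with i 1-indexed *)
Definition redge (a b k : nat) (i : 'I_(nroots a b k)) : {set Tvert a b k} :=
  (inr i : Tvert a b k) |: kset a b k (mT a b k i.+1).

Definition Troots (a b k : nat) : {set Tvert a b k} :=
  [set v : Tvert a b k | if v is inr _ then true else false].

Definition Tedges (a b k : nat) : seq {set Tvert a b k} :=
  [seq pedge a b k j | j <- iota 1 ((a + 1) - k)] ++
  [seq redge i | i <- enum 'I_(nroots a b k)].

(* Main.v *)
Require Import Defs.
From mathcomp Require Import all_boot all_order all_algebra.
Import Order.TTheory GRing.Theory Num.Theory.
From mathcomp Require Import zify.


Lemma divb (x d : nat) : 0 < d -> (x %/ d)*d <= x /\ x < (x%/d)*d + d.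
Proof. move=> d0; rewrite {2 4}(divn_eq x d); split; [lia|]. have := ltn_pmod x d0; lia. Qed.

Definition sig (a b k q : nat) : nat :=
  if q < a + 1 - k then q + ((q+1)*(b+k-(a+2)) + (a+2-k) - 1) %/ (a+2-k)
  else if q - (a+1-k) < b+k-(a+2) then (q-(a+1-k)) + ((q-(a+1-k))*(a+2-k)) %/ (b+k-(a+2))
  else b - 1.

Inductive sig_spec (M D q s : nat) : Prop :=
| SPath c : q + 1 < M -> (q+1)*D <= c*M -> c*M < (q+1)*D + M -> s = q + c -> sig_spec M D q s
| SRoot i t : q = M - 1 + i -> i < D -> t*D <= i*M -> i*M < t*D + D -> s = i + t -> sig_spec M D q s
| SRootD : q = M - 1 + D -> s = M + D - 1 -> sig_spec M D q s.

Lemma sigP k a b q : 2 <= k -> k - 1 <= a -> a + 3 <= b + k -> q < b ->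
  sig_spec (a+2-k) (b+k-(a+2)) q (sig a b k q).
Proof.
move=> hk ha hb qb; rewrite /sig.
have M1 : 0 < a+2-k by lia.
have D1 : 0 < b+k-(a+2) by lia.
case: ifP => h1.
  have [h2 h3] := divb ((q+1)*(b+k-(a+2)) + (a+2-k) - 1) _ M1.
  apply: (@SPath _ _ _ _ (((q+1)*(b+k-(a+2)) + (a+2-k) - 1) %/ (a+2-k))); lia.
case: ifP => h4.
  have [h2 h3] := divb ((q-(a+1-k))*(a+2-k)) _ D1.
  apply: (@SRoot _ _ _ _ (q - (a+1-k)) (((q-(a+1-k))*(a+2-k)) %/ (b+k-(a+2)))); lia.
apply: SRootD; lia.
Qed.

Lemma sig_spec_lt M D q s : 0 < M -> 0 < D -> sig_spec M D q s -> s < M + D.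
Proof. move=> M1 D1 [c h1 h2 h3 ->|i t h1 h2 h3 h4 ->|_ ->]; nia. Qed.


Lemma mc x y M : 0 < M -> x*M < y*M -> x < y.
Proof. by move=> M0; rewrite ltn_pmul2r. Qed.

Lemma mle x y M : x <= y -> x*M <= y*M.
Proof. by move=> h; rewrite leq_mul2r h orbT. Qed.

Lemma sig_spec_inj M D q1 q2 s1 s2 : 0 < M -> 0 < D -> sig_spec M D q1 s1 -> sig_spec M D q2 s2 ->
  s1 = s2 -> q1 = q2.
Proof.
move=> M1 D1 [c h1 h2 h3 ->|i t h1 h2 h3 h4 ->|-> ->] [c' h1' h2' h3' ->|i' t' h1' h2' h3' h4' ->|-> ->] E.
- case: (ltngtP q1 q2) => // hq.
  + have : c <= c'. rewrite -ltnS. apply: (@mc _ _ M) => //. have := mle _ _ D hq. lia.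
    lia.
  + have : c' <= c. rewrite -ltnS. apply: (@mc _ _ M) => //. have := mle _ _ D hq. lia.
    lia.
- case: (ltnP (i'*M) ((q1+1)*D)) => hc.
  + have ht : t' < q1 + 1 by apply: (@mc _ _ D); lia.
    have hi : i' < c by apply: (@mc _ _ M); lia.
    lia.
  + have ht : q1 < t' by apply: (@mc _ _ D); lia.
    have hi : c <= i' by rewrite -ltnS; apply: (@mc _ _ M); lia.
    lia.
- have : c <= D. rewrite -ltnS; apply: (@mc _ _ M) => //. have := mle _ _ D (ltnW h1). lia.
  lia.
- case: (ltnP (i*M) ((q2+1)*D)) => hc.
  + have ht : t < q2 + 1 by apply: (@mc _ _ D); lia.
    have hi : i < c' by apply: (@mc _ _ M); lia.
    lia.
  + have ht : q2 < t by apply: (@mc _ _ D); lia.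
    have hi : c' <= i by rewrite -ltnS; apply: (@mc _ _ M); lia.
    lia.
- case: (ltngtP i i') => // hq.
  + have : t <= t'. rewrite -ltnS. apply: (@mc _ _ D) => //. have := mle _ _ M hq. lia.
    lia.
  + have : t' <= t. rewrite -ltnS. apply: (@mc _ _ D) => //. have := mle _ _ M hq. lia.
    lia.
  + lia.
- have : t < M. apply: (@mc _ _ D) => //. have := mle _ _ M h2. lia.
  lia.
- have : c' <= D. rewrite -ltnS; apply: (@mc _ _ M) => //. have := mle _ _ D (ltnW h1'). lia.
  lia.
- have : t' < M. apply: (@mc _ _ D) => //. have := mle _ _ M h2'. lia.
  lia.
- done.
Qed.

Definition low (a b k q : nat) : nat :=
  if q < a + 1 - k then q
  else if q - (a+1-k) < b+k-(a+2) then ((q-(a+1-k))*(a+2-k)) %/ (b+k-(a+2))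
  else a + 2 - k - 1.
Definition hi (a b k q : nat) : nat :=
  if q < a + 1 - k then q + k else low a b k q + (k - 1).


Lemma memT k a b q (x : 'I_a) : 2 <= k -> k - 1 <= a -> a + 3 <= b + k -> q < b ->
  ((inl x : Tvert a b k) \in nth set0 (Tedges a b k) q) = (low a b k q <= x) && (x < hi a b k q).
Proof.
move=> hk ha hb qb.
rewrite /Tedges nth_cat size_map size_iota /low /hi.
case: ifP => h1.
  rewrite (nth_map 0) ?size_iota // nth_iota //. rewrite /pedge in_set.
  by rewrite (_ : 1 + q - 1 = q); last lia.
have hq : q - (a + 1 - k) < nroots a b k by rewrite /nroots; lia.
set i := Ordinal hq.
rewrite (nth_map i) ?size_enum_ord //.
have -> : nth i (enum 'I_(nroots a b k)) (q - (a + 1 - k)) = i.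
  by apply: val_inj; rewrite /= nth_enum_ord.
rewrite /redge in_setU1 /kset in_set /mT /=.
rewrite /low h1 !subSS !subn0; case: ifP => h2 //.
by rewrite add1n subSS subn0.
Qed.

Lemma cp (M D K j c : nat) : 1 <= M -> 1 <= D -> 1 <= j -> j + 1 <= M -> j*D <= c*M -> c*M < j*D + M ->
  (j-1)*(M+D) <= (j-1+c)*(M+K) /\ (j-1+c+1)*(M+K) <= (j+K+1)*(M+D).
Proof. move=> *. have cD: c <= D by nia. split; nia. Qed.
Lemma cr (M D K i t : nat) : 1 <= M -> 1 <= D -> i < D -> t*D <= i*M -> i*M < t*D + D ->
  t*(M+D) <= (i+t)*(M+K) /\ (i+t+1)*(M+K) <= (t+K+1)*(M+D).
Proof. move=> *. have tM: t < M by nia. split; nia. Qed.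
Lemma cr2 (M D K : nat) : 1 <= M -> 1 <= D ->
  (M-1)*(M+D) <= (M+D-1)*(M+K) /\ (M+D-1+1)*(M+K) <= (M+K)*(M+D).
Proof. move=> *. split; nia. Qed.

Lemma cover k a b q : 2 <= k -> k - 1 <= a -> a + 3 <= b + k -> q < b ->
  low a b k q * b <= sig a b k q * a /\ (sig a b k q + 1) * a <= hi a b k q * b.
Proof.
move=> hk ha hb qb.
have [K eK] : exists K, k = K + 2 by exists (k-2); lia.
have [M eM] : exists M, a = M + K /\ 0 < M by exists (a + 2 - k); lia.
case: eM => eM M0.
have [D eD] : exists D, b = M + D /\ 0 < D by exists (b + k - (a+2)); lia.
case: eD => eD D0.
subst k a b.
rewrite /sig /hi /low.
rewrite (_ : M + K + 1 - (K + 2) = M - 1); last lia.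
rewrite (_ : M + K + 2 - (K + 2) = M); last lia.
rewrite (_ : M + D + (K + 2) - (M + K + 2) = D); last lia.
case: ifP => h1.
  have [h2 h3] := divb ((q + 1) * D + M - 1) _ M0.
  move: (((q + 1) * D + M - 1) %/ M) h2 h3 => c h2 h3.
  have := @cp M D K (q+1) c M0 D0 (leq_addl _ _). 
  rewrite (_ : q + 1 - 1 = q); last lia.
  move=> H; have [] := H; try lia.
case: ifP => h4.
  have [h2 h3] := divb ((q - (M-1)) * M) _ D0.
  move: (((q - (M-1)) * M) %/ D) h2 h3 => t h2 h3.
  have [] := @cr M D K (q - (M-1)) t M0 D0 h4 h2 h3. lia.
have [] := @cr2 M D K M0 D0.
rewrite (_ : M - 1 + (K + 2 - 1) = M + K); last lia. by [].
Qed.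

Lemma cardSl k a b (S : {set Tvert a b k}) : S \subset ~: Troots a b k ->
  #|S| = #|[set x : 'I_a | (inl x : Tvert a b k) \in S]|.
Proof.
move=> sub.
have inj : injective (fun x : 'I_a => (inl x : Tvert a b k)) by move=> x y [].
have e : S = [set (inl x : Tvert a b k) | x in [set x : 'I_a | (inl x : Tvert a b k) \in S]].
  apply/setP => v.
case: v => [x|i].
  by rewrite (mem_imset _ _ inj) inE.
  apply/idP/imsetP => [vS|[x _ //]].
  by move: (subsetP sub _ vS); rewrite !inE.
by rewrite {1}e (card_imset _ inj).
Qed.

Lemma count_card (T : Type) (x0 : T) (s : seq T) (p : pred T) n : size s = n ->
  count p s = #|[set q : 'I_n | p (nth x0 s q)]|.
Proof.
move=> <-.
rewrite -{1}(mkseq_nth x0 s) /mkseq -val_enum_ord -map_comp count_map.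
rewrite cardE /enum_mem size_filter -enumT.
by rewrite count_filter; apply: eq_count => q; rewrite /= !inE ?andbT.
Qed.

Lemma core k a b (S : {set Tvert a b k}) : 2 <= k -> k - 1 <= a -> a + 3 <= b + k ->
  S \subset ~: Troots a b k -> b * #|S| <= a * eps (Tedges a b k) S.
Proof.
move=> hk ha hb sub.
set E := Tedges a b k.
have sE : size E = b.
  by rewrite /E /Tedges size_cat !size_map size_iota -enumT size_enum_ord /nroots; lia.
have M0 : 0 < a + 2 - k by lia.
have D0 : 0 < b + k - (a + 2) by lia.
have a0 : 0 < a by lia.
have eb : a + 2 - k + (b + k - (a + 2)) = b by lia.
have siglt q : q < b -> sig a b k q < b.
  by move=> qb; have := sig_spec_lt _ _ _ _ M0 D0 (sigP _ _ _ _ hk ha hb qb); rewrite eb.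
pose sg := fun q : 'I_b => Ordinal (siglt q (ltn_ord q)).
have sg_inj : injective sg.
  move=> q1 q2 /(congr1 val) /= e; apply: val_inj.
  exact: (sig_spec_inj _ _ _ _ _ _ M0 D0 (sigP _ _ _ _ hk ha hb (ltn_ord q1)) (sigP _ _ _ _ hk ha hb (ltn_ord q2)) e).
pose inv := invF sg_inj.
have ub (p : 'I_a * 'I_b) : (p.1 * b + p.2) %/ a < b.
  rewrite ltn_divLR //. have := ltn_ord p.1. have := ltn_ord p.2. nia.
have um (p : 'I_a * 'I_b) : (p.1 * b + p.2) %% a < a by rewrite ltn_pmod.
pose f := fun p : 'I_a * 'I_b => (inv (Ordinal (ub p)), Ordinal (um p)).
have f_inj : injective f.
  move=> [x1 s1] [x2 s2] [e1 e2].
  have e0 := congr1 sg e1.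
  rewrite /inv !f_invF in e0.
  have e3 := congr1 val e0; rewrite /= in e3.
  have eu : x1 * b + s1 = x2 * b + s2.
    by rewrite (divn_eq (x1 * b + s1) a) (divn_eq (x2 * b + s2) a) e3 e2.
  have hs1 := ltn_ord s1; have hs2 := ltn_ord s2.
  have ex : (x1 : nat) = x2.
    case: (ltngtP x1 x2) => // h.
    - have := mle _ _ b h. lia.
    - have := mle _ _ b h. lia.
  have es : (s1 : nat) = s2 by lia.
  by congr pair; apply: val_inj.
set S' := [set x : 'I_a | (inl x : Tvert a b k) \in S].
set Q := [set q : 'I_b | ~~ [disjoint nth set0 E q & S]].
have cA : #|setX S' [set: 'I_b]| = #|S'| * b by rewrite cardsX cardsT card_ord.
have cB : #|setX Q [set: 'I_a]| = #|Q| * a by rewrite cardsX cardsT card_ord.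
have sAB : f @: setX S' [set: 'I_b] \subset setX Q [set: 'I_a].
  apply/subsetP => _ /imsetP [[x s] + ->].
  rewrite !inE !andbT /= => xS.
  set q := inv (Ordinal (ub (x, s))).
  have esq : sig a b k q = (x * b + s) %/ a.
    by have := congr1 val (f_invF sg_inj (Ordinal (ub (x, s)))).
  have [c1 c2] := cover _ _ _ _ hk ha hb (ltn_ord q).
  rewrite esq in c1 c2.
  have [d1 d2] := divb (x * b + s) _ a0.
  have hs := ltn_ord s.
  have mem : (inl x : Tvert a b k) \in nth set0 E q.
    rewrite /E memT //; apply/andP; split.
    - rewrite -ltnS; apply: (@mc _ _ b); lia.
    - apply: (@mc _ _ b); lia.
  apply/negP => /disjointFr H.
  by have := H _ mem; rewrite xS.
have := subset_leq_card sAB.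
rewrite (card_imset _ f_inj) cA cB.
rewrite (cardSl _ _ _ _ sub) /eps (count_card _ set0 _ _ _ sE) -/Q -/S'.
lia.
Qed.

Lemma ratle (m n p q : nat) : 0 < n -> 0 < q -> m * q <= p * n ->
  (m%:R / n%:R <= p%:R / q%:R :> rat)%R.
Proof.
move=> n0 q0 h.
rewrite ler_pdivrMr ?ltr0n // mulrAC ler_pdivlMr ?ltr0n //.
by rewrite -!natrM ler_nat.
Qed.

Theorem lemma3 (k a b : nat) :
  2 <= k -> 0 < a -> 0 < b -> k - 1 <= a -> a + 3 <= b + k ->
  balanced (Troots a b k) (Tedges a b k) /\
  (forall S : {set Tvert a b k}, S \subset ~: Troots a b k -> S != set0 ->
     (b%:R / a%:R <= (eps (Tedges a b k) S)%:R / #|S|%:R :> rat)%R).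
Proof.
move=> hk a0 b0 ha hb.
have P2 : forall S : {set Tvert a b k}, S \subset ~: Troots a b k -> S != set0 ->
     (b%:R / a%:R <= (eps (Tedges a b k) S)%:R / #|S|%:R :> rat)%R.
  move=> S sub nz; apply: ratle => //; first by rewrite card_gt0.
  by rewrite [_ * a]mulnC; apply: core.
split => // S sub nz.
have cR : #|~: Troots a b k| = a.
  rewrite (cardSl _ _ _ _ (subxx _)) -[RHS]card_ord -cardsT.
  by apply: eq_card => x; rewrite !inE.
have sE : size (Tedges a b k) = b.
  by rewrite /Tedges size_cat !size_map size_iota -enumT size_enum_ord /nroots; lia.
have eR : eps (Tedges a b k) (~: Troots a b k) = b.
  apply/eqP; rewrite eqn_leq; apply/andP; split.
    by move: (count_size (fun e : {set Tvert a b k} => ~~ [disjoint e & ~: Troots a b k]) (Tedges a b k)); rewrite sE.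
  have := core _ _ _ _ hk ha hb (subxx (~: Troots a b k)); rewrite cR mulnC.
  by rewrite leq_pmul2l.
by rewrite eR cR; apply: P2.
Qed.
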